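(* Let $G_L=\langle(12),(23),(34),(67),A\rangle$ and $M_L=\langle(12),(23),(34),(56),(67),A\rangle$ in $GL(7,\mathbb{C})$, as in the context, so that $G_L$ has $12$ right cosets in $M_L$. Let $w_0$ be the unique non-identity element of the center of $M_L$. Consider the action of $M_L$ on the $220$ three-element subsets of the right coset space $G_L\backslash M_L$ given by $\{i,j,k\}\cdot\mu=\{i\mu,j\mu,k\mu\}$, where $(G_L\nu)\mu=G_L(\nu\mu)$. Call a subset $S\subseteq G_L\backslash M_L$ $L$-coherent if no two elements of $S$ are interchanged by the action of $w_0$, and $L$-incoherent otherwise. Then this action has exactly two orbits: one of length $160$, consisting of all $L$-coherent triples, and one of length $60$, consisting of all $L$-incoherent triples.
   Context: A permutation $\sigma\in S_7$ is identified with the $7\times7$ permutation matrix sending $e_i$ to $e_{\sigma(i)}$. The matrix $A$ is \[ A=\begin{pmatrix} 1&0&0&0&0&0&0\\ 0&1&0&0&0&0&0\\ 0&0&-1&0&0&0&1\\ 0&0&0&-1&0&0&1\\ 0&0&-1&-1&1&0&1\\ 0&0&-1&-1&0&1&1\\ 0&0&0&0&0&0&1 \end{pmatrix}. \] $M_L$ is isomorphic to the Coxeter group $W(D_6)$ (order 23040), whose center has order two, and $G_L\cong W(D_5)$ has order 1920. *)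

(* Defs.v *)
From HB Require Import structures.
From mathcomp Require Import all_boot all_order all_algebra all_fingroup.
Set Implicit Arguments. Unset Strict Implicit. Unset Printing Implicit Defensive.
Import GRing.Theory Num.Theory.
Local Open Scope ring_scope.

(* 7x7 integer matrices (the groups live in GL(7,Z) inside GL(7,C)). *)
Definition mat := 'M[int]_7.

(* permutation matrix of the transposition (i j), indices 1..7 as in the paper *)
Definition tr (i j : nat) : mat :=
  perm_mx (tperm (inord i.-1 : 'I_7) (inord j.-1)).

Definition A_rows : seq (seq int) :=
  [:: [:: 1; 0; 0; 0; 0; 0; 0];
      [:: 0; 1; 0; 0; 0; 0; 0];
      [:: 0; 0; -1; 0; 0; 0; 1];
      [:: 0; 0; 0; -1; 0; 0; 1];
      [:: 0; 0; -1; -1; 1; 0; 1];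
      [:: 0; 0; -1; -1; 0; 1; 1];
      [:: 0; 0; 0; 0; 0; 0; 1]].

Definition A : mat := \matrix_(i < 7, j < 7) nth 0 (nth [::] A_rows i) j.

Inductive gen (S : seq mat) : mat -> Prop :=
| gen1 : gen S 1%:M
| genL s x : s \in S -> gen S x -> gen S (s *m x)
| genLV s x : s \in S -> gen S x -> gen S (invmx s *m x).

Definition GL_gens : seq mat := [:: tr 1 2; tr 2 3; tr 3 4; tr 6 7; A].
Definition ML_gens : seq mat := [:: tr 1 2; tr 2 3; tr 3 4; tr 5 6; tr 6 7; A].

Definition G_L : mat -> Prop := gen GL_gens.
Definition M_L : mat -> Prop := gen ML_gens.

Definition coset := mat -> Prop.

Definition rcoset (H : mat -> Prop) (nu : mat) : coset :=
  fun x => exists h, H h /\ x = h *m nu.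

Definition is_coset (C : coset) : Prop := exists nu, M_L nu /\ C = rcoset G_L nu.

Definition cact (C : coset) (mu : mat) : coset :=
  fun x => exists y, C y /\ x = y *m mu.

Definition tact (S : coset -> Prop) (mu : mat) : coset -> Prop :=
  fun D => exists C, S C /\ D = cact C mu.

Definition is_triple (S : coset -> Prop) : Prop :=
  exists a b c, [/\ is_coset a, is_coset b, is_coset c &
    [/\ a <> b, a <> c, b <> c & S = (fun C => C = a \/ C = b \/ C = c)]].

Definition central_nonid (w : mat) : Prop :=
  [/\ M_L w, w <> 1%:M & forall m, M_L m -> w *m m = m *m w].

Definition coherent (w0 : mat) (S : coset -> Prop) : Prop :=
  forall a b, S a -> S b -> a <> b -> ~ (cact a w0 = b /\ cact b w0 = a).

Definition triple_orbit (S : coset -> Prop) : (coset -> Prop) -> Prop :=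
  fun S' => exists mu, M_L mu /\ S' = tact S mu.

Definition has_card (X : Type) (P : X -> Prop) (n : nat) : Prop :=
  exists f : 'I_n -> X, injective f /\ (forall x, P x <-> exists i, x = f i).

(* Main.v *)
Require Import Defs.
From mathcomp Require Import all_boot all_order all_algebra all_fingroup.
From Stdlib Require Import FunctionalExtensionality PropExtensionality.
From mathcomp Require Import zify.
Set Implicit Arguments. Unset Strict Implicit. Unset Printing Implicit Defensive.
Import GRing.Theory Num.Theory.
Local Open Scope ring_scope.

Definition M_of (m n : nat) (L : seq (seq int)) : 'M[int]_(m, n) :=
  \matrix_(i < m, j < n) nth 0 (nth [::] L i) j.

Definition dotL (k : nat) (L1 L2 : seq (seq int)) (i j : nat) : int :=
  foldr (fun l acc => nth 0 (nth [::] L1 i) l * nth 0 (nth [::] L2 l) j + acc) 0 (iota 0 k).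

Definition mulL (m k n : nat) (L1 L2 : seq (seq int)) : seq (seq int) :=
  [seq [seq dotL k L1 L2 i j | j <- iota 0 n] | i <- iota 0 m].

Lemma nth_mulL m k n L1 L2 (i j : nat) : (i < m)%N -> (j < n)%N ->
  nth 0 (nth [::] (mulL m k n L1 L2) i) j = dotL k L1 L2 i j.
Proof.
move=> im jn; rewrite /mulL (nth_map 0%N) ?size_iota // nth_iota //.
by rewrite (nth_map 0%N) ?size_iota // nth_iota.
Qed.

Lemma M_of_mul m k n L1 L2 :
  M_of m k L1 *m M_of k n L2 = M_of m n (mulL m k n L1 L2).
Proof.
apply/matrixP=> i j; rewrite !mxE nth_mulL //.
under eq_bigr do rewrite !mxE.
rewrite -(big_mkord xpredT (fun l => nth 0 (nth [::] L1 i) l * nth 0 (nth [::] L2 l) j)).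
rewrite /index_iota subn0 /dotL.
elim: (iota 0 k) => [|l s IH]; first by rewrite big_nil.
by rewrite big_cons IH.
Qed.

Definition id7 : seq (seq int) :=
  [seq [seq (i == j)%:R | j <- iota 0 7] | i <- iota 0 7].

Lemma M_of_id7 : M_of 7 7 id7 = 1%:M.
Proof.
apply/matrixP=> i j; rewrite !mxE /id7 (nth_map 0%N) ?size_iota // nth_iota //.
by rewrite (nth_map 0%N) ?size_iota // nth_iota.
Qed.

Definition trL (a b : nat) : seq (seq int) :=
  [seq [seq ((if i == a.-1 then b.-1 else if i == b.-1 then a.-1 else i) == j)%:R
     | j <- iota 0 7] | i <- iota 0 7].

Lemma tr_of a b : (0 < a <= 7)%N -> (0 < b <= 7)%N -> tr a b = M_of 7 7 (trL a b).
Proof.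
move=> /andP[a0 a7] /andP[b0 b7].
apply/matrixP=> i j; rewrite /tr /perm_mx !mxE /trL (nth_map 0%N) ?size_iota // nth_iota //.
rewrite (nth_map 0%N) ?size_iota // nth_iota //.
have ha : (a.-1 < 7)%N by rewrite prednK.
have hb : (b.-1 < 7)%N by rewrite prednK.
rewrite !add0n; case: tpermP => [->|->|].
- by rewrite inordK // eqxx -val_eqE /= inordK.
- rewrite inordK // -val_eqE /= inordK //.
  by case: (eqVneq b.-1 a.-1) => [->|nb]; rewrite ?eqxx // (negPf nb) eqxx.
- move=> hia hib.
  have h1 : (i == a.-1 :> nat) = false.
    by apply/negP=> /eqP h; apply: hia; apply: val_inj; rewrite /= inordK.
  have h2 : (i == b.-1 :> nat) = false.
    by apply/negP=> /eqP h; apply: hib; apply: val_inj; rewrite /= inordK.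
  by rewrite h1 h2.
Qed.
Definition ptsL : seq (seq (seq int)) := [:: [:: [:: Posz 0; Posz 0; Posz 0; Posz 0; Posz 1; Negz 0; Negz 0]];
  [:: [:: Posz 0; Posz 0; Posz 0; Posz 0; Negz 0; Posz 1; Negz 0]];
  [:: [:: Posz 0; Posz 0; Posz 0; Posz 0; Negz 0; Negz 0; Posz 1]];
  [:: [:: Posz 0; Posz 0; Posz 2; Posz 2; Negz 0; Negz 0; Negz 0]];
  [:: [:: Posz 0; Posz 2; Posz 0; Posz 2; Negz 0; Negz 0; Negz 0]];
  [:: [:: Posz 2; Posz 0; Posz 0; Posz 2; Negz 0; Negz 0; Negz 0]];
  [:: [:: Posz 0; Posz 2; Posz 2; Posz 0; Negz 0; Negz 0; Negz 0]];
  [:: [:: Posz 2; Posz 0; Posz 2; Posz 0; Negz 0; Negz 0; Negz 0]];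
  [:: [:: Posz 2; Posz 2; Posz 0; Posz 0; Negz 0; Negz 0; Negz 0]];
  [:: [:: Posz 2; Posz 2; Posz 2; Posz 2; Negz 0; Negz 0; Negz 2]];
  [:: [:: Posz 2; Posz 2; Posz 2; Posz 2; Negz 0; Negz 2; Negz 0]];
  [:: [:: Posz 2; Posz 2; Posz 2; Posz 2; Negz 2; Negz 0; Negz 0]]].
Definition sig : seq (seq nat) := [:: [:: 0; 1; 2; 3; 5; 4; 7; 6; 8; 9; 10; 11];
  [:: 0; 1; 2; 4; 3; 5; 6; 8; 7; 9; 10; 11];
  [:: 0; 1; 2; 3; 6; 7; 4; 5; 8; 9; 10; 11];
  [:: 1; 0; 2; 3; 4; 5; 6; 7; 8; 9; 11; 10];
  [:: 0; 2; 1; 3; 4; 5; 6; 7; 8; 10; 9; 11];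
  [:: 0; 1; 3; 2; 6; 7; 4; 5; 9; 8; 10; 11]].
Definition tw : seq (seq nat) := [:: [:: ];
  [:: 3];
  [:: 3; 4];
  [:: 3; 4; 5];
  [:: 3; 4; 5; 1];
  [:: 3; 4; 5; 1; 0];
  [:: 3; 4; 5; 1; 2];
  [:: 3; 4; 5; 1; 0; 2];
  [:: 3; 4; 5; 1; 0; 2; 1];
  [:: 3; 4; 5; 1; 0; 2; 1; 5];
  [:: 3; 4; 5; 1; 0; 2; 1; 5; 4];
  [:: 3; 4; 5; 1; 0; 2; 1; 5; 4; 3]].
Definition sw : seq (seq (seq nat)) := [:: [:: [:: 0]; [:: 0]; [:: 0]; [:: 0]; [:: ]; [:: ]; [:: ]; [:: ]; [:: 2]; [:: 2]; [:: 2]; [:: 2]];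
  [:: [:: 1]; [:: 1]; [:: 1]; [:: ]; [:: ]; [:: 0]; [:: 2]; [:: ]; [:: ]; [:: 0; 1; 2; 1; 0]; [:: 0; 1; 2; 1; 0]; [:: 0; 1; 2; 1; 0]];
  [:: [:: 2]; [:: 2]; [:: 2]; [:: 2]; [:: ]; [:: ]; [:: ]; [:: ]; [:: 0]; [:: 0]; [:: 0]; [:: 0]];
  [:: [:: ]; [:: ]; [:: 3]; [:: 3]; [:: 3]; [:: 3]; [:: 3]; [:: 3]; [:: 3]; [:: 3]; [:: ]; [:: ]];
  [:: [:: 3]; [:: ]; [:: ]; [:: 4; 2]; [:: 4; 2]; [:: 4; 2]; [:: 4; 2]; [:: 4; 2]; [:: 4; 2]; [:: ]; [:: ]; [:: 3]];
  [:: [:: 4]; [:: 4]; [:: ]; [:: ]; [:: 1; 2; 1]; [:: 1; 2; 1]; [:: 1; 2; 1]; [:: 1; 2; 1]; [:: ]; [:: ]; [:: 4; 2; 0]; [:: 4; 2; 0]]].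
Definition w0L : seq (seq int) := [:: [:: Negz 1; Negz 0; Negz 0; Negz 0; Posz 1; Posz 1; Posz 1];
  [:: Negz 0; Negz 1; Negz 0; Negz 0; Posz 1; Posz 1; Posz 1];
  [:: Negz 0; Negz 0; Negz 1; Negz 0; Posz 1; Posz 1; Posz 1];
  [:: Negz 0; Negz 0; Negz 0; Negz 1; Posz 1; Posz 1; Posz 1];
  [:: Negz 1; Negz 1; Negz 1; Negz 1; Posz 1; Posz 2; Posz 2];
  [:: Negz 1; Negz 1; Negz 1; Negz 1; Posz 2; Posz 1; Posz 2];
  [:: Negz 1; Negz 1; Negz 1; Negz 1; Posz 2; Posz 2; Posz 1]].
Definition w0w : seq nat := [:: 5; 4; 1; 5; 4; 1; 5; 3; 4; 0; 1; 5; 4; 1; 5; 3; 4; 0; 1; 5; 4; 3; 1; 0].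
Definition CL : seq (seq int) := [:: [:: Posz 32; Posz 32; Posz 32; Posz 32; Posz 32; Negz 63; Negz 31];
  [:: Posz 32; Posz 32; Posz 32; Posz 32; Negz 31; Posz 0; Negz 31];
  [:: Posz 32; Posz 32; Posz 32; Negz 31; Posz 32; Posz 0; Negz 31];
  [:: Posz 32; Posz 32; Posz 32; Negz 31; Negz 31; Posz 0; Posz 32];
  [:: Posz 0; Posz 64; Posz 64; Posz 0; Posz 0; Posz 0; Posz 0];
  [:: Posz 64; Posz 0; Posz 64; Posz 0; Posz 0; Posz 0; Posz 0];
  [:: Posz 64; Posz 64; Posz 0; Posz 0; Posz 0; Posz 0; Posz 0]].
Definition dd : int := Negz 127.

Definition MLl : seq (seq (seq int)) := [:: trL 1 2; trL 2 3; trL 3 4; trL 5 6; trL 6 7; A_rows].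
Definition GLl : seq (seq (seq int)) := [:: trL 1 2; trL 2 3; trL 3 4; trL 6 7; A_rows].
Definition wL (S : seq (seq (seq int))) (w : seq nat) :=
  foldr (fun i acc => mulL 7 7 7 (nth id7 S i) acc) id7 w.
Definition ptL p := nth [::] ptsL p.
Definition sg i p := nth 0%N (nth [::] sig i) p.
Definition tL p := wL MLl (nth [::] tw p).
Definition swo i p := nth [::] (nth [::] sw i) p.

Definition check1 := all (fun i => all (fun p => mulL 1 7 7 (ptL p) (nth id7 MLl i) == ptL (sg i p)) (iota 0 12)) (iota 0 6).
Definition check2 := all (fun p => mulL 1 7 7 (ptL 0) (tL p) == ptL p) (iota 0 12).
Definition check3 := all (fun i => all (fun p =>
   mulL 7 7 7 (tL p) (nth id7 MLl i) == mulL 7 7 7 (wL GLl (swo i p)) (tL (sg i p))) (iota 0 12)) (iota 0 6).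

Lemma c1 : check1. Proof. by vm_compute. Qed.
Lemma c2 : check2. Proof. by vm_compute. Qed.
Lemma c3 : check3. Proof. by vm_compute. Qed.

Definition invol (S : seq mat) := forall s, s \in S -> s *m s = 1%:M.

Lemma invmx_invol (s : mat) : s *m s = 1%:M -> invmx s = s.
Proof.
move=> ss; have u : s \in unitmx by apply/(mulmx1_unit ss).1.
by rewrite -[invmx s]mulmx1 -ss mulmxA mulVmx // mul1mx.
Qed.

Lemma gen_mul S a b : gen S a -> gen S b -> gen S (a *m b).
Proof.
elim=> [|s x Hs _ IH|s x Hs _ IH] Hb; first by rewrite mul1mx.
- rewrite -mulmxA; exact: genL (IH Hb).
- rewrite -mulmxA; exact: genLV (IH Hb).
Qed.

Lemma gen_indI S (P : mat -> Prop) : invol S -> P 1%:M ->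
  (forall s x, s \in S -> gen S x -> P x -> P (s *m x)) -> forall x, gen S x -> P x.
Proof.
move=> iS P1 Ps x Hx; induction Hx as [|s x Hs Hx IH|s x Hs Hx IH] => //.
  exact: Ps.
by rewrite invmx_invol ?iS //; apply: Ps.
Qed.

Lemma gen_inv S x : invol S -> gen S x -> exists2 y, gen S y & y *m x = 1%:M.
Proof.
move=> iS; move: x; apply: (gen_indI (P := fun x => exists2 y, gen S y & y *m x = 1%:M)) => // [|s x Hs Hx [y Hy yx]].
  by exists 1%:M; [exact: gen1 | rewrite mul1mx].
exists (y *m s); first by apply: gen_mul Hy _; rewrite -[s]mulmx1; apply: genL => //; exact: gen1.
by rewrite -mulmxA (mulmxA s) iS // mul1mx.
Qed.

Lemma gen_sub S T x : {subset S <= T} -> gen S x -> gen T x.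
Proof.
move=> sST; elim=> [|s y Hs _ IH|s y Hs _ IH]; first exact: gen1.
- by apply: genL => //; apply: sST.
- by apply: genLV => //; apply: sST.
Qed.

Definition wmat (S : seq mat) (w : seq nat) : mat :=
  foldr (fun i acc => nth 1%:M S i *m acc) 1%:M w.

Lemma gen_wmat S w : all (fun i => i < size S)%N w -> gen S (wmat S w).
Proof.
elim: w => [|i w IH] /=; first by move=> _; exact: gen1.
by case/andP=> hi hw; apply: genL; [exact: mem_nth | exact: IH].
Qed.

Lemma nth_mapM (SL : seq (seq (seq int))) i :
  nth 1%:M (map (M_of 7 7) SL) i = M_of 7 7 (nth id7 SL i).
Proof. by elim: SL i => [|L SL IH] [|i] //=; rewrite M_of_id7. Qed.

Lemma wmat_map SL w : wmat (map (M_of 7 7) SL) w = M_of 7 7 (wL SL w).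
Proof.
elim: w => [|i w IH] /=; first by rewrite M_of_id7.
by rewrite IH nth_mapM M_of_mul.
Qed.

Lemma A_of : A = M_of 7 7 A_rows. Proof. by []. Qed.

Lemma ML_of : ML_gens = map (M_of 7 7) MLl.
Proof. by rewrite /ML_gens /= !tr_of. Qed.
Lemma GL_of : GL_gens = map (M_of 7 7) GLl.
Proof. by rewrite /GL_gens /= !tr_of. Qed.

Lemma GL_sub : {subset GL_gens <= ML_gens}.
Proof. move=> s; rewrite /GL_gens /ML_gens !inE. by move=> /or4P[| | |/orP[]] ->; rewrite ?orbT. Qed.

Definition checkI := all (fun L => mulL 7 7 7 L L == id7) MLl.
Lemma cI : checkI. Proof. by vm_compute. Qed.

Lemma invol_ML : invol ML_gens.
Proof.
move=> s; rewrite ML_of => /mapP[L hL ->]; rewrite M_of_mul.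
by have /allP/(_ L hL)/eqP -> := cI; rewrite M_of_id7.
Qed.
Lemma invol_GL : invol GL_gens.
Proof. by move=> s /GL_sub; apply: invol_ML. Qed.

Lemma GL_ML x : G_L x -> M_L x.
Proof. exact: gen_sub GL_sub. Qed.

Lemma memS (S : seq mat) s : s \in S -> exists2 i, (i < size S)%N & s = nth 1%:M S i.
Proof. by move=> hs; exists (index s S); rewrite ?index_mem ?nth_index. Qed.

Definition pt p : 'rV[int]_7 := M_of 1 7 (ptL p).
Definition gM i : mat := nth 1%:M ML_gens i.
Definition t p : mat := wmat ML_gens (nth [::] tw p).

Definition checkV := all (fun i => all (fun p => sg i p < 12) (iota 0 12))%N (iota 0 6)
  && all (fun p => all (fun i => i < 6) (nth [::] tw p))%N (iota 0 12)
  && all (fun i => all (fun p => all (fun k => k < 5) (swo i p)) (iota 0 12))%N (iota 0 6)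
  && all (fun p => all (fun q => (p == q) || has (fun j => nth 0 (nth [::] (ptL p) 0) j != nth 0 (nth [::] (ptL q) 0) j) (iota 0 7)) (iota 0 12)) (iota 0 12)
  && all (fun i => sg i 0 == 0)%N [:: 0; 1; 2; 4; 5]%N.
Lemma cV : checkV. Proof. by vm_compute. Qed.

Lemma iotaP n k : (k < n)%N -> k \in iota 0 n.
Proof. by move=> h; rewrite mem_iota. Qed.

Lemma sg_lt i p : (i < 6)%N -> (p < 12)%N -> (sg i p < 12)%N.
Proof.
move=> hi hp; have := cV; rewrite /checkV => /andP[/andP[/andP[/andP[h _] _] _] _].
by move/allP: h => /(_ i (iotaP hi))/allP/(_ p (iotaP hp)).
Qed.

Lemma tw_ok p : (p < 12)%N -> all (fun i => i < size ML_gens)%N (nth [::] tw p).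
Proof.
move=> hp; have := cV; rewrite /checkV => /andP[/andP[/andP[/andP[_ h] _] _] _].
by move/allP: h => /(_ p (iotaP hp)).
Qed.

Lemma sw_ok i p : (i < 6)%N -> (p < 12)%N -> all (fun k => k < size GL_gens)%N (swo i p).
Proof.
move=> hi hp; have := cV; rewrite /checkV => /andP[/andP[/andP[_ h] _] _].
by move/allP: h => /(_ i (iotaP hi))/allP/(_ p (iotaP hp)).
Qed.

Lemma pt_inj p q : (p < 12)%N -> (q < 12)%N -> pt p = pt q -> p = q.
Proof.
move=> hp hq e; have := cV; rewrite /checkV => /andP[/andP[_ h] _].
move/allP: h => /(_ p (iotaP hp))/allP/(_ q (iotaP hq)) /orP[/eqP //|/hasP[j hj]].
have hj7 : (j < 7)%N by rewrite mem_iota in hj.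
move/matrixP: e => /(_ 0 (Ordinal hj7)); rewrite !mxE /= => ->.
by rewrite eqxx.
Qed.

Lemma sg_fix i : i \in [:: 0; 1; 2; 4; 5]%N -> sg i 0 = 0%N.
Proof.
move=> hi; have := cV; rewrite /checkV => /andP[_ h].
by move/allP: h => /(_ i hi)/eqP.
Qed.

Lemma pt_gen i p : (i < 6)%N -> (p < 12)%N -> pt p *m gM i = pt (sg i p).
Proof.
move=> hi hp; rewrite /gM ML_of nth_mapM /pt M_of_mul.
by move/allP: c1 => /(_ i (iotaP hi))/allP/(_ p (iotaP hp))/eqP ->.
Qed.

Lemma tM p : (p < 12)%N -> M_L (t p).
Proof. by move=> hp; apply: gen_wmat; apply: tw_ok. Qed.

Lemma t0 : t 0 = 1%:M. Proof. by []. Qed.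

Lemma rt p : (p < 12)%N -> pt 0 *m t p = pt p.
Proof.
move=> hp; rewrite /t ML_of wmat_map /pt M_of_mul.
by move/allP: c2 => /(_ p (iotaP hp))/eqP ->.
Qed.

Lemma schreier i p : (i < 6)%N -> (p < 12)%N ->
  exists2 h, G_L h & t p *m gM i = h *m t (sg i p).
Proof.
move=> hi hp; exists (wmat GL_gens (swo i p)); first by apply: gen_wmat; apply: sw_ok.
rewrite /t /gM ML_of GL_of !wmat_map nth_mapM !M_of_mul.
by move/allP: c3 => /(_ i (iotaP hi))/allP/(_ p (iotaP hp))/eqP ->.
Qed.

Lemma r_fix h : G_L h -> pt 0 *m h = pt 0.
Proof.
move: h; apply: (gen_indI invol_GL) => [|s x Hs Hx IH]; first by rewrite mulmx1.
have [i hi ->] := memS Hs.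
have -> : nth 1%:M GL_gens i = gM (nth 0%N [:: 0; 1; 2; 4; 5] i).
  by move: i hi; do 5?case=> //.
have hi' : nth 0%N [:: 0; 1; 2; 4; 5] i \in [:: 0; 1; 2; 4; 5]%N by rewrite mem_nth.
rewrite mulmxA pt_gen ?sg_fix //.
by move: hi'; rewrite !inE => /or4P[| | |/orP[]] /eqP ->.
Qed.

Lemma ML_mem s : s \in ML_gens -> exists2 i, (i < 6)%N & s = gM i.
Proof. by move/memS. Qed.

Lemma decomp nu : M_L nu -> forall p, (p < 12)%N -> exists q, [/\ (q < 12)%N, pt p *m nu = pt q &
   exists2 h, G_L h & t p *m nu = h *m t q].
Proof.
move: nu; apply: (gen_indI invol_ML) => [|s x Hs Hx IH] p hp.
  exists p; split => //; first by rewrite mulmx1.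
  by exists 1%:M; [exact: gen1 | rewrite mulmx1 mul1mx].
have [i hi ->] := ML_mem Hs.
have [q [hq e1 [h2 Hh2 e2]]] := IH _ (sg_lt hi hp).
exists q; split => //; first by rewrite mulmxA pt_gen.
have [h1 Hh1 e3] := schreier hi hp.
exists (h1 *m h2); first exact: gen_mul.
by rewrite mulmxA e3 -mulmxA e2 mulmxA.
Qed.

Lemma predext (T : Type) (P Q : T -> Prop) : (forall x, P x <-> Q x) -> P = Q.
Proof.
move=> h; apply: functional_extensionality => x; apply: propositional_extensionality; exact: h.
Qed.

Definition cos p : mat -> Prop := Defs.rcoset G_L (t p).

Lemma rcoset_mulG h y : G_L h -> Defs.rcoset G_L (h *m y) = Defs.rcoset G_L y.
Proof.
move=> Hh; apply: predext => x; split.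
- case=> h' [Hh' ->]; exists (h' *m h); split; [exact: gen_mul | by rewrite mulmxA].
- case=> h' [Hh' ->]; have [h'' Hh'' e] := gen_inv invol_GL Hh.
  exists (h' *m h''); split; first exact: gen_mul.
  by rewrite -mulmxA (mulmxA h'') e mul1mx.
Qed.

Lemma cact_rcoset nu mu : cact (Defs.rcoset G_L nu) mu = Defs.rcoset G_L (nu *m mu).
Proof.
apply: predext => x; split.
- by case=> y [[h [Hh ->]] ->]; exists h; split => //; rewrite mulmxA.
- by case=> h [Hh ->]; exists (h *m nu); split; [exists h | rewrite mulmxA].
Qed.

Lemma is_coset_iff C : is_coset C <-> exists2 p, (p < 12)%N & C = cos p.
Proof.
split.
- case=> nu [Hnu ->]; have [q [hq _ [h Hh e]]] := decomp Hnu (isT : (0 < 12)%N).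
  rewrite t0 mul1mx in e; exists q => //; by rewrite e rcoset_mulG.
- by case=> p hp ->; exists (t p); split => //; exact: tM.
Qed.

Lemma cos_is p : (p < 12)%N -> is_coset (cos p).
Proof. by move=> hp; apply/is_coset_iff; exists p. Qed.

Lemma cos_inj p q : (p < 12)%N -> (q < 12)%N -> cos p = cos q -> p = q.
Proof.
move=> hp hq e.
have : cos q (t p) by rewrite -e; exists 1%:M; split; [exact: gen1 | by rewrite mul1mx].
case=> h [Hh ep]; apply: pt_inj => //.
by rewrite -(rt hp) -(rt hq) ep mulmxA r_fix.
Qed.

Lemma cact_cos p mu : M_L mu -> (p < 12)%N ->
  exists q, [/\ (q < 12)%N, cact (cos p) mu = cos q & pt p *m mu = pt q].
Proof.
move=> Hmu hp; have [q [hq e1 [h Hh e2]]] := decomp Hmu hp.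
by exists q; split => //; rewrite /cos cact_rcoset e2 rcoset_mulG.
Qed.

Lemma gM_ML i : (i < 6)%N -> M_L (gM i).
Proof.
move=> hi; rewrite -[gM i]mulmx1; apply: genL; last exact: gen1.
exact: mem_nth.
Qed.

Lemma cact_gen i p : (i < 6)%N -> (p < 12)%N -> cact (cos p) (gM i) = cos (sg i p).
Proof.
move=> hi hp; have [q [hq -> e]] := cact_cos (gM_ML hi) hp.
by rewrite (pt_inj hq (sg_lt hi hp) _) // -e pt_gen.
Qed.

Lemma cact_mul C a b : cact C (a *m b) = cact (cact C a) b.
Proof.
apply: predext => x; split.
- by case=> y [Cy ->]; exists (y *m a); split; [exists y | rewrite mulmxA].
- by case=> z [[y [Cy ->]] ->]; exists y; split => //; rewrite mulmxA.
Qed.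

Lemma cact1 C : cact C 1%:M = C.
Proof.
apply: predext => x; split; first by case=> y [Cy ->]; rewrite mulmx1.
by move=> Cx; exists x; rewrite mulmx1.
Qed.

Definition wperm (w : seq nat) p := foldl (fun q i => sg i q) p w.

Lemma cact_word w p : all (fun i => i < 6)%N w -> (p < 12)%N ->
  cact (cos p) (wmat ML_gens w) = cos (wperm w p) /\ (wperm w p < 12)%N.
Proof.
elim: w p => [|i w IH] p /=; first by rewrite cact1.
case/andP=> hi hw hp; rewrite cact_mul.
have -> : nth 1%:M ML_gens i = gM i by [].
rewrite cact_gen //; exact: IH hw (sg_lt hi hp).
Qed.

Lemma pt_word w p : all (fun i => i < 6)%N w -> (p < 12)%N ->
  pt p *m wmat ML_gens w = pt (wperm w p).
Proof.
elim: w p => [|i w IH] p /=; first by rewrite mulmx1.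
case/andP=> hi hw hp; rewrite mulmxA.
have -> : nth 1%:M ML_gens i = gM i by [].
rewrite pt_gen //; exact: IH hw (sg_lt hi hp).
Qed.

Lemma iotaP' n k : k \in iota 0 n -> (k < n)%N.
Proof. by rewrite mem_iota. Qed.

Definition BL := [seq nth [::] (ptL k) 0 | k <- iota 0 7].
Definition dI := [seq [seq dd *+ (i == j) | j <- iota 0 7] | i <- iota 0 7].
Definition consb q0 := all (fun i => all (fun p =>
   wperm (nth [::] tw (sg i p)) q0 == sg i (wperm (nth [::] tw p) q0)) (iota 0 12)) (iota 0 6).
Lemma cW1 : wL MLl w0w == w0L. Proof. by vm_compute. Qed.
Lemma cW2 : all (fun L => mulL 7 7 7 w0L L == mulL 7 7 7 L w0L) MLl. Proof. by vm_compute. Qed.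
Lemma cW3 : all (fun i => i < 6)%N w0w. Proof. by vm_compute. Qed.
Lemma cW4 : w0L != id7. Proof. by vm_compute. Qed.
Lemma cW5 : all (fun p => wperm w0w p == 11 - p)%N (iota 0 12). Proof. by vm_compute. Qed.
Lemma cW6 : all (fun p => wperm (nth [::] tw p) 11 == 11 - p)%N (iota 0 12). Proof. by vm_compute. Qed.
Lemma cW7 : all (fun q => consb q ==> (q == 0) || (q == 11))%N (iota 0 12). Proof. by vm_compute. Qed.
Lemma cW8 : mulL 7 7 7 CL BL == dI. Proof. by vm_compute. Qed.
Lemma cW9 : dd != 0. Proof. by vm_compute. Qed.

Definition w0M : mat := M_of 7 7 w0L.

Lemma w0_word : w0M = wmat ML_gens w0w.
Proof. by rewrite ML_of wmat_map (eqP cW1). Qed.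

Lemma w0_central : central_nonid w0M.
Proof.
have hc := cW2; have hw := cW3; have hn := cW4; split.
- by rewrite w0_word; apply: gen_wmat.
- rewrite -M_of_id7 => e; move/eqP: hn; apply.
  by move/matrixP: e => /(_ 0 0); rewrite !mxE.
- apply: (gen_indI invol_ML) => [|s x Hs Hx IH]; first by rewrite mulmx1 mul1mx.
  have ws : w0M *m s = s *m w0M.
    move: Hs; rewrite ML_of => /mapP[L hL ->].
    by rewrite /w0M !M_of_mul; move/allP: hc => /(_ L hL)/eqP ->.
  by rewrite mulmxA ws -mulmxA IH mulmxA.
Qed.

Lemma w0_anti p : (p < 12)%N -> cact (cos p) w0M = cos (11 - p).
Proof.
move=> hp; have hw := cW3; have ha := cW5.
rewrite w0_word; have [-> _] := cact_word hw hp.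
by move/allP: ha => /(_ p (iotaP hp))/eqP ->.
Qed.

Lemma M_of_dI : M_of 7 7 dI = dd%:M.
Proof.
apply/matrixP=> i j; rewrite !mxE /dI (nth_map 0%N) ?size_iota // nth_iota //.
by rewrite (nth_map 0%N) ?size_iota // nth_iota.
Qed.

Lemma faithful (w : mat) : (forall p, (p < 7)%N -> pt p *m w = pt p) -> w = 1%:M.
Proof.
move=> hw; have hC := cW8; have hd := cW9.
have BMw : M_of 7 7 BL *m w = M_of 7 7 BL.
  apply/row_matrixP => k; rewrite row_mul.
  have -> : row k (M_of 7 7 BL) = pt k.
    apply/rowP => j; rewrite !mxE /BL (nth_map 0%N) ?size_iota // nth_iota //.
  by rewrite hw.
have e : dd%:M *m w = dd%:M.
  by rewrite -M_of_dI -(eqP hC) -M_of_mul -mulmxA BMw.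
rewrite mul_scalar_mx -scalemx1 in e.
apply/matrixP => i j; move/matrixP: e => /(_ i j); rewrite !mxE.
by apply: (mulfI hd).
Qed.

Lemma anti_w (w : mat) : central_nonid w -> forall p, (p < 12)%N -> cact (cos p) w = cos (11 - p).
Proof.
case=> Hw wn1 Hc.
have [q0 [hq0 _ e0]] := cact_cos Hw (isT : (0 < 12)%N).
have twok : forall p, (p < 12)%N -> all (fun i => i < 6)%N (nth [::] tw p) by move=> p hp; exact: tw_ok.
have key : forall p, (p < 12)%N -> pt p *m w = pt (wperm (nth [::] tw p) q0).
  move=> p hp; rewrite -(rt hp) -mulmxA -Hc; last exact: tM.
  rewrite mulmxA e0 /t pt_word //; exact: twok.
have wpl : forall p, (p < 12)%N -> (wperm (nth [::] tw p) q0 < 12)%N.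
  by move=> p hp; have [] := cact_word (twok p hp) hq0.
have cons : consb q0.
  apply/allP => i /iotaP' hi.
  apply/allP => p /iotaP' hp.
  apply/eqP; apply: pt_inj; [exact: wpl (sg_lt hi hp) | exact: sg_lt (wpl p hp) | ].
  rewrite -key ?sg_lt // -pt_gen // -mulmxA -Hc; last exact: gM_ML.
  rewrite mulmxA key //.
  by rewrite pt_gen // wpl.
have h11 := cW6; have hcons := cW7.
move/allP: hcons => /(_ q0 (iotaP hq0)); rewrite cons /= => /orP[/eqP q00|/eqP q011].
- exfalso; apply: wn1; apply: faithful => p hp.
  have hp12 : (p < 12)%N by apply: ltn_trans hp _.
  rewrite key // q00.
  suff -> : wperm (nth [::] tw p) 0 = p by [].
  by move: p hp {hp12}; do 7?case=> //.
- move=> p hp; have [q [hq -> e]] := cact_cos Hw hp; congr cos.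
  apply: pt_inj => //; first by rewrite ltnS leq_subr.
  rewrite -e key // q011.
  by move/allP: h11 => /(_ p (iotaP hp))/eqP ->.
Qed.
Definition table : seq (seq nat * seq nat) := [:: ([:: 0; 1; 2], [:: ]);
  ([:: 0; 1; 3], [:: 5]);
  ([:: 0; 1; 4], [:: 1; 5]);
  ([:: 0; 1; 5], [:: 0; 1; 5]);
  ([:: 0; 1; 6], [:: 2; 1; 5]);
  ([:: 0; 1; 7], [:: 2; 0; 1; 5]);
  ([:: 0; 1; 8], [:: 1; 2; 0; 1; 5]);
  ([:: 0; 1; 9], [:: 5; 1; 2; 0; 1; 5]);
  ([:: 0; 1; 10], [:: 3]);
  ([:: 0; 1; 11], [:: ]);
  ([:: 0; 2; 3], [:: 4; 5]);
  ([:: 0; 2; 4], [:: 4; 1; 5]);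
  ([:: 0; 2; 5], [:: 4; 0; 1; 5]);
  ([:: 0; 2; 6], [:: 4; 2; 1; 5]);
  ([:: 0; 2; 7], [:: 4; 2; 0; 1; 5]);
  ([:: 0; 2; 8], [:: 4; 1; 2; 0; 1; 5]);
  ([:: 0; 2; 9], [:: 4; 3]);
  ([:: 0; 2; 10], [:: 4; 5; 1; 2; 0; 1; 5]);
  ([:: 0; 2; 11], [:: 4]);
  ([:: 0; 3; 4], [:: 5; 4; 2; 1; 5]);
  ([:: 0; 3; 5], [:: 5; 4; 2; 0; 1; 5]);
  ([:: 0; 3; 6], [:: 5; 4; 1; 5]);
  ([:: 0; 3; 7], [:: 5; 4; 0; 1; 5]);
  ([:: 0; 3; 8], [:: 5; 4; 3]);
  ([:: 0; 3; 9], [:: 5; 4; 1; 2; 0; 1; 5]);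
  ([:: 0; 3; 10], [:: 4; 5; 4; 1; 2; 0; 1; 5]);
  ([:: 0; 3; 11], [:: 5; 4]);
  ([:: 0; 4; 5], [:: 1; 5; 4; 2; 0; 1; 5]);
  ([:: 0; 4; 6], [:: 1; 5; 4; 1; 5]);
  ([:: 0; 4; 7], [:: 1; 5; 4; 3]);
  ([:: 0; 4; 8], [:: 1; 5; 4; 0; 1; 5]);
  ([:: 0; 4; 9], [:: 1; 5; 4; 1; 2; 0; 1; 5]);
  ([:: 0; 4; 10], [:: 4; 1; 5; 4; 1; 2; 0; 1; 5]);
  ([:: 0; 4; 11], [:: 1; 5; 4]);
  ([:: 0; 5; 6], [:: 0; 1; 5; 4; 3]);
  ([:: 0; 5; 7], [:: 0; 1; 5; 4; 1; 5]);
  ([:: 0; 5; 8], [:: 0; 1; 5; 4; 0; 1; 5]);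
  ([:: 0; 5; 9], [:: 0; 1; 5; 4; 1; 2; 0; 1; 5]);
  ([:: 0; 5; 10], [:: 4; 0; 1; 5; 4; 1; 2; 0; 1; 5]);
  ([:: 0; 5; 11], [:: 0; 1; 5; 4]);
  ([:: 0; 6; 7], [:: 2; 1; 5; 4; 2; 0; 1; 5]);
  ([:: 0; 6; 8], [:: 2; 1; 5; 4; 0; 1; 5]);
  ([:: 0; 6; 9], [:: 5; 1; 5; 4; 0; 1; 5]);
  ([:: 0; 6; 10], [:: 4; 5; 1; 5; 4; 0; 1; 5]);
  ([:: 0; 6; 11], [:: 2; 1; 5; 4]);
  ([:: 0; 7; 8], [:: 2; 0; 1; 5; 4; 0; 1; 5]);
  ([:: 0; 7; 9], [:: 5; 0; 1; 5; 4; 0; 1; 5]);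
  ([:: 0; 7; 10], [:: 4; 5; 0; 1; 5; 4; 0; 1; 5]);
  ([:: 0; 7; 11], [:: 2; 0; 1; 5; 4]);
  ([:: 0; 8; 9], [:: 1; 5; 0; 1; 5; 4; 0; 1; 5]);
  ([:: 0; 8; 10], [:: 4; 1; 5; 0; 1; 5; 4; 0; 1; 5]);
  ([:: 0; 8; 11], [:: 1; 2; 0; 1; 5; 4]);
  ([:: 0; 9; 10], [:: 5; 4; 1; 5; 0; 1; 5; 4; 0; 1; 5]);
  ([:: 0; 9; 11], [:: 5; 1; 2; 0; 1; 5; 4]);
  ([:: 0; 10; 11], [:: 4; 5; 1; 2; 0; 1; 5; 4]);
  ([:: 1; 2; 3], [:: 3; 4; 5]);
  ([:: 1; 2; 4], [:: 3; 4; 1; 5]);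
  ([:: 1; 2; 5], [:: 3; 4; 0; 1; 5]);
  ([:: 1; 2; 6], [:: 3; 4; 2; 1; 5]);
  ([:: 1; 2; 7], [:: 3; 4; 2; 0; 1; 5]);
  ([:: 1; 2; 8], [:: 3; 4; 1; 2; 0; 1; 5]);
  ([:: 1; 2; 9], [:: 3; 4; 3]);
  ([:: 1; 2; 10], [:: 3; 4]);
  ([:: 1; 2; 11], [:: 3; 4; 5; 1; 2; 0; 1; 5]);
  ([:: 1; 3; 4], [:: 5; 3; 4; 2; 1; 5]);
  ([:: 1; 3; 5], [:: 5; 3; 4; 2; 0; 1; 5]);
  ([:: 1; 3; 6], [:: 5; 3; 4; 1; 5]);
  ([:: 1; 3; 7], [:: 5; 3; 4; 0; 1; 5]);
  ([:: 1; 3; 8], [:: 5; 3; 4; 3]);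
  ([:: 1; 3; 9], [:: 5; 3; 4; 1; 2; 0; 1; 5]);
  ([:: 1; 3; 10], [:: 5; 3; 4]);
  ([:: 1; 3; 11], [:: 3; 4; 5; 4; 1; 2; 0; 1; 5]);
  ([:: 1; 4; 5], [:: 1; 5; 3; 4; 2; 0; 1; 5]);
  ([:: 1; 4; 6], [:: 1; 5; 3; 4; 1; 5]);
  ([:: 1; 4; 7], [:: 1; 5; 3; 4; 3]);
  ([:: 1; 4; 8], [:: 1; 5; 3; 4; 0; 1; 5]);
  ([:: 1; 4; 9], [:: 1; 5; 3; 4; 1; 2; 0; 1; 5]);
  ([:: 1; 4; 10], [:: 1; 5; 3; 4]);
  ([:: 1; 4; 11], [:: 3; 4; 1; 5; 4; 1; 2; 0; 1; 5]);
  ([:: 1; 5; 6], [:: 0; 1; 5; 3; 4; 3]);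
  ([:: 1; 5; 7], [:: 0; 1; 5; 3; 4; 1; 5]);
  ([:: 1; 5; 8], [:: 0; 1; 5; 3; 4; 0; 1; 5]);
  ([:: 1; 5; 9], [:: 0; 1; 5; 3; 4; 1; 2; 0; 1; 5]);
  ([:: 1; 5; 10], [:: 0; 1; 5; 3; 4]);
  ([:: 1; 5; 11], [:: 3; 4; 0; 1; 5; 4; 1; 2; 0; 1; 5]);
  ([:: 1; 6; 7], [:: 2; 1; 5; 3; 4; 2; 0; 1; 5]);
  ([:: 1; 6; 8], [:: 2; 1; 5; 3; 4; 0; 1; 5]);
  ([:: 1; 6; 9], [:: 5; 1; 5; 3; 4; 0; 1; 5]);
  ([:: 1; 6; 10], [:: 2; 1; 5; 3; 4]);
  ([:: 1; 6; 11], [:: 3; 4; 5; 1; 5; 4; 0; 1; 5]);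
  ([:: 1; 7; 8], [:: 2; 0; 1; 5; 3; 4; 0; 1; 5]);
  ([:: 1; 7; 9], [:: 5; 0; 1; 5; 3; 4; 0; 1; 5]);
  ([:: 1; 7; 10], [:: 2; 0; 1; 5; 3; 4]);
  ([:: 1; 7; 11], [:: 3; 4; 5; 0; 1; 5; 4; 0; 1; 5]);
  ([:: 1; 8; 9], [:: 1; 5; 0; 1; 5; 3; 4; 0; 1; 5]);
  ([:: 1; 8; 10], [:: 1; 2; 0; 1; 5; 3; 4]);
  ([:: 1; 8; 11], [:: 3; 4; 1; 5; 0; 1; 5; 4; 0; 1; 5]);
  ([:: 1; 9; 10], [:: 5; 1; 2; 0; 1; 5; 3; 4]);
  ([:: 1; 9; 11], [:: 5; 3; 4; 1; 5; 0; 1; 5; 4; 0; 1; 5]);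
  ([:: 1; 10; 11], [:: 3; 4; 5; 1; 2; 0; 1; 5; 4]);
  ([:: 2; 3; 4], [:: 4; 5; 3; 4; 2; 1; 5]);
  ([:: 2; 3; 5], [:: 4; 5; 3; 4; 2; 0; 1; 5]);
  ([:: 2; 3; 6], [:: 4; 5; 3; 4; 1; 5]);
  ([:: 2; 3; 7], [:: 4; 5; 3; 4; 0; 1; 5]);
  ([:: 2; 3; 8], [:: 4; 5; 3; 4; 3]);
  ([:: 2; 3; 9], [:: 4; 5; 3; 4]);
  ([:: 2; 3; 10], [:: 4; 5; 3; 4; 1; 2; 0; 1; 5]);
  ([:: 2; 3; 11], [:: 3; 4; 5; 3; 4; 1; 2; 0; 1; 5]);
  ([:: 2; 4; 5], [:: 4; 1; 5; 3; 4; 2; 0; 1; 5]);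
  ([:: 2; 4; 6], [:: 4; 1; 5; 3; 4; 1; 5]);
  ([:: 2; 4; 7], [:: 4; 1; 5; 3; 4; 3]);
  ([:: 2; 4; 8], [:: 4; 1; 5; 3; 4; 0; 1; 5]);
  ([:: 2; 4; 9], [:: 4; 1; 5; 3; 4]);
  ([:: 2; 4; 10], [:: 4; 1; 5; 3; 4; 1; 2; 0; 1; 5]);
  ([:: 2; 4; 11], [:: 3; 4; 1; 5; 3; 4; 1; 2; 0; 1; 5]);
  ([:: 2; 5; 6], [:: 4; 0; 1; 5; 3; 4; 3]);
  ([:: 2; 5; 7], [:: 4; 0; 1; 5; 3; 4; 1; 5]);
  ([:: 2; 5; 8], [:: 4; 0; 1; 5; 3; 4; 0; 1; 5]);
  ([:: 2; 5; 9], [:: 4; 0; 1; 5; 3; 4]);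
  ([:: 2; 5; 10], [:: 4; 0; 1; 5; 3; 4; 1; 2; 0; 1; 5]);
  ([:: 2; 5; 11], [:: 3; 4; 0; 1; 5; 3; 4; 1; 2; 0; 1; 5]);
  ([:: 2; 6; 7], [:: 4; 2; 1; 5; 3; 4; 2; 0; 1; 5]);
  ([:: 2; 6; 8], [:: 4; 2; 1; 5; 3; 4; 0; 1; 5]);
  ([:: 2; 6; 9], [:: 4; 2; 1; 5; 3; 4]);
  ([:: 2; 6; 10], [:: 4; 5; 1; 5; 3; 4; 0; 1; 5]);
  ([:: 2; 6; 11], [:: 3; 4; 5; 1; 5; 3; 4; 0; 1; 5]);
  ([:: 2; 7; 8], [:: 4; 2; 0; 1; 5; 3; 4; 0; 1; 5]);
  ([:: 2; 7; 9], [:: 4; 2; 0; 1; 5; 3; 4]);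
  ([:: 2; 7; 10], [:: 4; 5; 0; 1; 5; 3; 4; 0; 1; 5]);
  ([:: 2; 7; 11], [:: 3; 4; 5; 0; 1; 5; 3; 4; 0; 1; 5]);
  ([:: 2; 8; 9], [:: 4; 1; 2; 0; 1; 5; 3; 4]);
  ([:: 2; 8; 10], [:: 4; 1; 5; 0; 1; 5; 3; 4; 0; 1; 5]);
  ([:: 2; 8; 11], [:: 3; 4; 1; 5; 0; 1; 5; 3; 4; 0; 1; 5]);
  ([:: 2; 9; 10], [:: 4; 5; 1; 2; 0; 1; 5; 3; 4]);
  ([:: 2; 9; 11], [:: 3; 4; 5; 1; 2; 0; 1; 5; 3; 4]);
  ([:: 2; 10; 11], [:: 4; 5; 3; 4; 1; 5; 0; 1; 5; 4; 0; 1; 5]);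
  ([:: 3; 4; 5], [:: 5; 4; 2; 1; 5; 3; 4; 2; 0; 1; 5]);
  ([:: 3; 4; 6], [:: 5; 4; 1; 5; 3; 4; 1; 5]);
  ([:: 3; 4; 7], [:: 5; 4; 0; 1; 5; 3; 4; 3]);
  ([:: 3; 4; 8], [:: 5; 4; 2; 1; 5; 3; 4]);
  ([:: 3; 4; 9], [:: 5; 4; 2; 1; 5; 3; 4; 0; 1; 5]);
  ([:: 3; 4; 10], [:: 5; 4; 5; 1; 5; 3; 4; 0; 1; 5]);
  ([:: 3; 4; 11], [:: 5; 3; 4; 5; 1; 5; 3; 4; 0; 1; 5]);
  ([:: 3; 5; 6], [:: 5; 4; 1; 5; 3; 4; 3]);
  ([:: 3; 5; 7], [:: 5; 4; 0; 1; 5; 3; 4; 1; 5]);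
  ([:: 3; 5; 8], [:: 5; 4; 2; 0; 1; 5; 3; 4]);
  ([:: 3; 5; 9], [:: 5; 4; 2; 0; 1; 5; 3; 4; 0; 1; 5]);
  ([:: 3; 5; 10], [:: 5; 4; 5; 0; 1; 5; 3; 4; 0; 1; 5]);
  ([:: 3; 5; 11], [:: 5; 3; 4; 5; 0; 1; 5; 3; 4; 0; 1; 5]);
  ([:: 3; 6; 7], [:: 5; 4; 1; 5; 3; 4; 2; 0; 1; 5]);
  ([:: 3; 6; 8], [:: 5; 4; 1; 5; 3; 4]);
  ([:: 3; 6; 9], [:: 5; 4; 1; 5; 3; 4; 0; 1; 5]);
  ([:: 3; 6; 10], [:: 4; 5; 4; 1; 5; 3; 4; 0; 1; 5]);
  ([:: 3; 6; 11], [:: 3; 4; 5; 4; 1; 5; 3; 4; 0; 1; 5]);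
  ([:: 3; 7; 8], [:: 5; 4; 0; 1; 5; 3; 4]);
  ([:: 3; 7; 9], [:: 5; 4; 0; 1; 5; 3; 4; 0; 1; 5]);
  ([:: 3; 7; 10], [:: 4; 5; 4; 0; 1; 5; 3; 4; 0; 1; 5]);
  ([:: 3; 7; 11], [:: 3; 4; 5; 4; 0; 1; 5; 3; 4; 0; 1; 5]);
  ([:: 3; 8; 9], [:: 5; 4; 1; 2; 0; 1; 5; 3; 4]);
  ([:: 3; 8; 10], [:: 4; 5; 4; 1; 2; 0; 1; 5; 3; 4]);
  ([:: 3; 8; 11], [:: 3; 4; 5; 4; 1; 2; 0; 1; 5; 3; 4]);
  ([:: 3; 9; 10], [:: 5; 4; 1; 5; 0; 1; 5; 3; 4; 0; 1; 5]);
  ([:: 3; 9; 11], [:: 5; 3; 4; 1; 5; 0; 1; 5; 3; 4; 0; 1; 5]);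
  ([:: 3; 10; 11], [:: 4; 5; 3; 4; 1; 5; 0; 1; 5; 3; 4; 0; 1; 5]);
  ([:: 4; 5; 6], [:: 1; 5; 4; 1; 5; 3; 4; 3]);
  ([:: 4; 5; 7], [:: 0; 1; 5; 4; 1; 5; 3; 4; 3]);
  ([:: 4; 5; 8], [:: 1; 5; 4; 0; 1; 5; 3; 4; 1; 5]);
  ([:: 4; 5; 9], [:: 1; 5; 4; 2; 0; 1; 5; 3; 4; 0; 1; 5]);
  ([:: 4; 5; 10], [:: 1; 5; 4; 5; 0; 1; 5; 3; 4; 0; 1; 5]);
  ([:: 4; 5; 11], [:: 1; 5; 3; 4; 5; 0; 1; 5; 3; 4; 0; 1; 5]);
  ([:: 4; 6; 7], [:: 1; 5; 4; 1; 5; 3; 4]);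
  ([:: 4; 6; 8], [:: 1; 5; 4; 1; 5; 3; 4; 2; 0; 1; 5]);
  ([:: 4; 6; 9], [:: 1; 5; 4; 1; 5; 3; 4; 0; 1; 5]);
  ([:: 4; 6; 10], [:: 4; 1; 5; 4; 1; 5; 3; 4; 0; 1; 5]);
  ([:: 4; 6; 11], [:: 3; 4; 1; 5; 4; 1; 5; 3; 4; 0; 1; 5]);
  ([:: 4; 7; 8], [:: 1; 5; 4; 0; 1; 5; 3; 4]);
  ([:: 4; 7; 9], [:: 1; 5; 4; 1; 2; 0; 1; 5; 3; 4]);
  ([:: 4; 7; 10], [:: 4; 1; 5; 4; 1; 2; 0; 1; 5; 3; 4]);
  ([:: 4; 7; 11], [:: 3; 4; 1; 5; 4; 1; 2; 0; 1; 5; 3; 4]);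
  ([:: 4; 8; 9], [:: 1; 5; 4; 0; 1; 5; 3; 4; 0; 1; 5]);
  ([:: 4; 8; 10], [:: 4; 1; 5; 4; 0; 1; 5; 3; 4; 0; 1; 5]);
  ([:: 4; 8; 11], [:: 3; 4; 1; 5; 4; 0; 1; 5; 3; 4; 0; 1; 5]);
  ([:: 4; 9; 10], [:: 1; 5; 4; 1; 5; 0; 1; 5; 3; 4; 0; 1; 5]);
  ([:: 4; 9; 11], [:: 1; 5; 3; 4; 1; 5; 0; 1; 5; 3; 4; 0; 1; 5]);
  ([:: 4; 10; 11], [:: 4; 1; 5; 3; 4; 1; 5; 0; 1; 5; 3; 4; 0; 1; 5]);
  ([:: 5; 6; 7], [:: 0; 1; 5; 4; 1; 5; 3; 4]);
  ([:: 5; 6; 8], [:: 0; 1; 5; 4; 0; 1; 5; 3; 4]);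
  ([:: 5; 6; 9], [:: 5; 1; 5; 4; 0; 1; 5; 3; 4]);
  ([:: 5; 6; 10], [:: 4; 5; 1; 5; 4; 0; 1; 5; 3; 4]);
  ([:: 5; 6; 11], [:: 3; 4; 5; 1; 5; 4; 0; 1; 5; 3; 4]);
  ([:: 5; 7; 8], [:: 0; 1; 5; 4; 1; 5; 3; 4; 2; 0; 1; 5]);
  ([:: 5; 7; 9], [:: 0; 1; 5; 4; 1; 5; 3; 4; 0; 1; 5]);
  ([:: 5; 7; 10], [:: 4; 0; 1; 5; 4; 1; 5; 3; 4; 0; 1; 5]);
  ([:: 5; 7; 11], [:: 3; 4; 0; 1; 5; 4; 1; 5; 3; 4; 0; 1; 5]);
  ([:: 5; 8; 9], [:: 0; 1; 5; 4; 0; 1; 5; 3; 4; 0; 1; 5]);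
  ([:: 5; 8; 10], [:: 4; 0; 1; 5; 4; 0; 1; 5; 3; 4; 0; 1; 5]);
  ([:: 5; 8; 11], [:: 3; 4; 0; 1; 5; 4; 0; 1; 5; 3; 4; 0; 1; 5]);
  ([:: 5; 9; 10], [:: 0; 1; 5; 4; 1; 5; 0; 1; 5; 3; 4; 0; 1; 5]);
  ([:: 5; 9; 11], [:: 0; 1; 5; 3; 4; 1; 5; 0; 1; 5; 3; 4; 0; 1; 5]);
  ([:: 5; 10; 11], [:: 4; 0; 1; 5; 3; 4; 1; 5; 0; 1; 5; 3; 4; 0; 1; 5]);
  ([:: 6; 7; 8], [:: 2; 1; 5; 4; 0; 1; 5; 3; 4; 1; 5]);
  ([:: 6; 7; 9], [:: 5; 1; 5; 4; 0; 1; 5; 3; 4; 1; 5]);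
  ([:: 6; 7; 10], [:: 4; 5; 1; 5; 4; 0; 1; 5; 3; 4; 1; 5]);
  ([:: 6; 7; 11], [:: 3; 4; 5; 1; 5; 4; 0; 1; 5; 3; 4; 1; 5]);
  ([:: 6; 8; 9], [:: 2; 1; 5; 4; 0; 1; 5; 3; 4; 0; 1; 5]);
  ([:: 6; 8; 10], [:: 4; 2; 1; 5; 4; 0; 1; 5; 3; 4; 0; 1; 5]);
  ([:: 6; 8; 11], [:: 3; 4; 2; 1; 5; 4; 0; 1; 5; 3; 4; 0; 1; 5]);
  ([:: 6; 9; 10], [:: 5; 4; 1; 5; 4; 0; 1; 5; 3; 4; 0; 1; 5]);
  ([:: 6; 9; 11], [:: 5; 3; 4; 1; 5; 4; 0; 1; 5; 3; 4; 0; 1; 5]);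
  ([:: 6; 10; 11], [:: 4; 5; 3; 4; 1; 5; 4; 0; 1; 5; 3; 4; 0; 1; 5]);
  ([:: 7; 8; 9], [:: 2; 0; 1; 5; 4; 0; 1; 5; 3; 4; 0; 1; 5]);
  ([:: 7; 8; 10], [:: 4; 2; 0; 1; 5; 4; 0; 1; 5; 3; 4; 0; 1; 5]);
  ([:: 7; 8; 11], [:: 3; 4; 2; 0; 1; 5; 4; 0; 1; 5; 3; 4; 0; 1; 5]);
  ([:: 7; 9; 10], [:: 5; 4; 0; 1; 5; 4; 0; 1; 5; 3; 4; 0; 1; 5]);
  ([:: 7; 9; 11], [:: 5; 3; 4; 0; 1; 5; 4; 0; 1; 5; 3; 4; 0; 1; 5]);
  ([:: 7; 10; 11], [:: 4; 5; 3; 4; 0; 1; 5; 4; 0; 1; 5; 3; 4; 0; 1; 5]);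
  ([:: 8; 9; 10], [:: 1; 5; 4; 0; 1; 5; 4; 0; 1; 5; 3; 4; 0; 1; 5]);
  ([:: 8; 9; 11], [:: 1; 5; 3; 4; 0; 1; 5; 4; 0; 1; 5; 3; 4; 0; 1; 5]);
  ([:: 8; 10; 11], [:: 4; 1; 5; 3; 4; 0; 1; 5; 4; 0; 1; 5; 3; 4; 0; 1; 5]);
  ([:: 9; 10; 11], [:: 5; 4; 1; 5; 3; 4; 0; 1; 5; 4; 0; 1; 5; 3; 4; 0; 1; 5])].

Definition tripN (l : seq nat) : (mat -> Prop) -> Prop :=
  fun C => exists2 p, p \in l & C = cos p.

Lemma tripN_eq l1 l2 : l1 =i l2 -> tripN l1 = tripN l2.
Proof.
move=> e; apply: predext => C; split; case=> p pl ->; exists p => //; by rewrite ?e // -e.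
Qed.

Lemma trip3 a b c :
  (fun C => C = cos a \/ C = cos b \/ C = cos c) = tripN [:: a; b; c].
Proof.
apply: predext => C; split.
- by case=> [->|[->|->]]; [exists a | exists b | exists c]; rewrite // !inE eqxx ?orbT.
- by case=> p; rewrite !inE => /or3P[]/eqP-> ->; tauto.
Qed.

Definition valid (l : seq nat) := [&& size l == 3, uniq l & all (fun p => p < 12)%N l].

Lemma valid_cases l : valid l -> exists a b c, l = [:: a; b; c].
Proof. by case: l => [|a [|b [|c [|d l]]]] //; exists a, b, c. Qed.

Lemma valid_lt l p : valid l -> p \in l -> (p < 12)%N.
Proof. by case/and3P=> _ _ /allP; apply. Qed.

Lemma valid3 a b c : valid [:: a; b; c] ->
  [/\ (a < 12)%N, (b < 12)%N, (c < 12)%N & [/\ a != b, a != c & b != c]].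
Proof.
move=> /and3P[_ u /and4P[ha hb hc _]]; move: u; rewrite /= !inE !negb_or andbT.
move=> /andP[/andP[h1 h2] h3].
by split.
Qed.

Lemma is_triple_iff S : is_triple S <-> exists2 l, valid l & S = tripN l.
Proof.
split.
- case=> a [b [c [ca cb cc [nab nac nbc ->]]]].
  case/is_coset_iff: ca => pa ha ea; case/is_coset_iff: cb => pb hb eb;
  case/is_coset_iff: cc => pc hc ec; subst.
  exists [:: pa; pb; pc]; last exact: trip3.
  have hab : pa != pb by apply/eqP => e; apply: nab; rewrite e.
  have hac : pa != pc by apply/eqP => e; apply: nac; rewrite e.
  have hbc : pb != pc by apply/eqP => e; apply: nbc; rewrite e.
  by rewrite /valid /= !inE (negPf hab) (negPf hac) (negPf hbc) ha hb hc.
- case=> l vl ->; have [a [b [c el]]] := valid_cases vl; subst l.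
  have [ha hb hc [hab hac hbc]] := valid3 vl.
  exists (cos a), (cos b), (cos c); split; try exact: cos_is.
  split; last by rewrite trip3.
  + by move/cos_inj => e; move/eqP: hab; apply; apply: e.
  + by move/cos_inj => e; move/eqP: hac; apply; apply: e.
  + by move/cos_inj => e; move/eqP: hbc; apply; apply: e.
Qed.

Definition cohb (l : seq nat) := ~~ has (fun p => (11 - p)%N \in l) l.

Lemma coh_iff w l : central_nonid w -> valid l -> (coherent w (tripN l) <-> cohb l).
Proof.
move=> cw vl; have hl := valid_lt vl.
have h11 : forall p, (p < 12)%N -> (11 - p < 12)%N by move=> p _; rewrite ltnS leq_subr.
split.
- move=> coh; apply/negP => /hasP[p pl ql].
  apply: (coh (cos p) (cos (11 - p))); [by exists p | by exists (11 - p)%N | | ].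
  + move/cos_inj => e; have := e (hl p pl) (h11 p (hl p pl)).
    have := hl p pl; lia.
  + rewrite !anti_w ?h11 ?hl // subKn //; by have := hl p pl; lia.
- move=> hc a b [p pl ->] [q ql ->] nab [e1 _].
  rewrite anti_w ?hl // in e1.
  have e := cos_inj (h11 p (hl p pl)) (hl q ql) e1.
  move/negP: hc; apply; apply/hasP; exists p => //; by rewrite e.
Qed.

Lemma cact_inj mu C D : M_L mu -> cact C mu = cact D mu -> C = D.
Proof.
move=> Hmu e; have [mu' Hmu' e'] := gen_inv invol_ML Hmu.
have e2 : mu *m mu' = 1%:M by apply: mulmx1C.
by rewrite -[C]cact1 -[D]cact1 -e2 !cact_mul e.
Qed.

Lemma cact_comm w mu C : central_nonid w -> M_L mu ->
  cact (cact C mu) w = cact (cact C w) mu.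
Proof. by case=> _ _ Hc Hmu; rewrite -!cact_mul Hc. Qed.

Lemma tact_mul S a b : tact (tact S a) b = tact S (a *m b).
Proof.
apply: predext => D; split.
- by case=> C [[E [SE ->]] ->]; exists E; split => //; rewrite cact_mul.
- by case=> E [SE ->]; exists (cact E a); split; [exists E | rewrite cact_mul].
Qed.

Lemma tact1 S : tact S 1%:M = S.
Proof.
apply: predext => D; split; first by case=> C [SC ->]; rewrite cact1.
by move=> SD; exists D; rewrite cact1.
Qed.

Lemma tact_inv S mu : M_L mu -> exists2 mu', M_L mu' & tact (tact S mu) mu' = S.
Proof.
move=> Hmu; have [mu' Hmu' e'] := gen_inv invol_ML Hmu.
have e2 : mu *m mu' = 1%:M by apply: mulmx1C.
by exists mu' => //; rewrite tact_mul e2 tact1.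
Qed.

Lemma coherent_tact w S mu : central_nonid w -> M_L mu -> coherent w S -> coherent w (tact S mu).
Proof.
move=> cw Hmu coh a' b' [a [Sa ->]] [b [Sb ->]] nab [e1 e2].
apply: (coh a b Sa Sb); first by move=> e; apply: nab; rewrite e.
rewrite cact_comm // in e1; rewrite cact_comm // in e2.
split; [exact: (cact_inj Hmu e1) | exact: (cact_inj Hmu e2)].
Qed.

Lemma coherent_tact_iff w S mu : central_nonid w -> M_L mu ->
  (coherent w (tact S mu) <-> coherent w S).
Proof.
move=> cw Hmu; split; last exact: coherent_tact.
move=> h; have [mu' Hmu' e] := tact_inv S Hmu; rewrite -e; exact: coherent_tact.
Qed.

Lemma triple_tact S mu : M_L mu -> is_triple S -> is_triple (tact S mu).
Proof.
move=> Hmu [a [b [c [ca cb cc [nab nac nbc ->]]]]].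
have cosc : forall C, is_coset C -> is_coset (cact C mu).
  move=> C [nu [Hnu ->]]; exists (nu *m mu); split; [exact: gen_mul | exact: cact_rcoset].
exists (cact a mu), (cact b mu), (cact c mu); split; try exact: cosc.
split.
- by move/(cact_inj Hmu).
- by move/(cact_inj Hmu).
- by move/(cact_inj Hmu).
- apply: predext => D; split.
  + by case=> C [[->|[->|->]] ->]; tauto.
  + case=> [->|[->|->]]; eexists; (split; last reflexivity); tauto.
Qed.

Lemma tact_word l w : all (fun i => i < 6)%N w -> all (fun p => p < 12)%N l ->
  tact (tripN l) (wmat ML_gens w) = tripN (map (wperm w) l).
Proof.
move=> hw /allP hl; apply: predext => D; split.
- case=> C [[p pl ->] ->]; exists (wperm w p); first exact: map_f.
  exact: (cact_word hw (hl p pl)).1.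
- case=> q /mapP[p pl ->] ->; exists (cos p); split; first by exists p.
  by rewrite (cact_word hw (hl p pl)).1.
Qed.

Definition T0 := [:: 0; 1; 2]%N.
Definition T1 := [:: 0; 1; 11]%N.
Definition lookup (l : seq nat) := nth [::] (map snd table) (index l (map fst table)).

Definition checkT := all (fun a => all (fun b => all (fun c =>
  uniq [:: a; b; c] ==>
   (all (fun i => i < 6)%N (lookup (sort leq [:: a; b; c])) &&
    perm_eq (map (wperm (lookup (sort leq [:: a; b; c]))) [:: a; b; c])
            (if cohb [:: a; b; c] then T0 else T1))) (iota 0 12)) (iota 0 12)) (iota 0 12).
Lemma cT : checkT. Proof. by vm_compute. Qed.

Lemma trans l : valid l -> exists mu, M_L mu /\ tact (tripN l) mu = tripN (if cohb l then T0 else T1).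
Proof.
move=> vl; have [a [b [c el]]] := valid_cases vl; subst l.
have [ha hb hc [hab hac hbc]] := valid3 vl.
have u : uniq [:: a; b; c] by case/and3P: vl.
move/allP: cT => /(_ a (iotaP ha))/allP/(_ b (iotaP hb))/allP/(_ c (iotaP hc)).
rewrite u /= => /andP[hw hp].
exists (wmat ML_gens (lookup (sort leq [:: a; b; c]))); split; first exact: gen_wmat.
rewrite tact_word //; last by case/and3P: vl.
by apply: tripN_eq; apply: perm_mem.
Qed.

Lemma orbit_gen w S : central_nonid w -> is_triple S ->
  triple_orbit S = (fun S' => is_triple S' /\ (coherent w S' <-> coherent w S)).
Proof.
move=> cw tS; apply: predext => S'; split.
- case=> mu [Hmu ->]; split; first exact: triple_tact.
  exact: coherent_tact_iff.
- case=> tS' hiff.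
  case/is_triple_iff: (tS) => l vl el; case/is_triple_iff: (tS') => l' vl' el'.
  have [mu1 [H1 e1]] := trans vl; have [mu2 [H2 e2]] := trans vl'.
  have ec : cohb l = cohb l'.
    apply/idP/idP => h.
    + by apply/(coh_iff cw vl'); rewrite -el'; apply/hiff; rewrite el; apply/(coh_iff cw vl).
    + by apply/(coh_iff cw vl); rewrite -el; apply/hiff; rewrite el'; apply/(coh_iff cw vl').
  have [mu2' H2' e2'] := tact_inv S' H2.
  exists (mu1 *m mu2'); split; first exact: gen_mul.
  by rewrite -tact_mul el e1 ec -e2 -el' e2'.
Qed.

Lemma card_gen (Pb : seq nat -> bool) (P : ((mat -> Prop) -> Prop) -> Prop) (L : seq (seq nat)) n :
  (forall l, valid l -> (P (tripN l) <-> Pb l)) ->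
  all valid L -> uniq L -> size L = n ->
  all (fun l1 : seq nat => all (fun l2 : seq nat => (l1 == l2) || ~~ all (fun p : nat => p \in l2) l1) L) L ->
  all (fun a => all (fun b => all (fun c =>
     (uniq [:: a; b; c] && Pb [:: a; b; c]) ==> (sort leq [:: a; b; c] \in L))
     (iota 0 12)) (iota 0 12)) (iota 0 12) ->
  all Pb L ->
  has_card (fun S => is_triple S /\ P S) n.
Proof.
move=> hP /allP vL uL sL /allP dL cL /allP pL; subst n.
exists (fun i : 'I_(size L) => tripN (nth [::] L i)); split.
- move=> i j e; apply/val_inj/eqP.
  rewrite -(nth_uniq [::] (ltn_ord i) (ltn_ord j) uL).
  have li := mem_nth [::] (ltn_ord i); have lj := mem_nth [::] (ltn_ord j).
  have sub : all (fun p => p \in nth [::] L j) (nth [::] L i).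
    apply/allP => p pi.
    have : tripN (nth [::] L j) (cos p) by rewrite -e; exists p.
    case=> q qj /cos_inj -> //; [exact: valid_lt (vL _ li) pi | exact: valid_lt (vL _ lj) qj].
  by move/allP: (dL _ li) => /(_ _ lj); rewrite sub orbF.
- move=> S; split.
  + case=> /is_triple_iff [l vl ->] Pl.
    have Pbl := (hP l vl).1 Pl.
    have [a [b [c el]]] := valid_cases vl; subst l.
    have [ha hb hc _] := valid3 vl.
    have u : uniq [:: a; b; c] by case/and3P: vl.
    move/allP: cL => /(_ a (iotaP ha))/allP/(_ b (iotaP hb))/allP/(_ c (iotaP hc)).
    rewrite u Pbl /= => hs.
    have hi : (index (sort leq [:: a; b; c]) L < size L)%N by rewrite index_mem.
    exists (Ordinal hi).
    rewrite /= nth_index //; apply: tripN_eq => x.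
    by rewrite (perm_mem (permEl (perm_sort leq [:: a; b; c])) x).
  + case=> i ->; have li := mem_nth [::] (ltn_ord i); have vl := vL _ li.
    split; first by apply/is_triple_iff; exists (nth [::] L i).
    by apply/(hP _ vl); exact: pL.
Qed.

Definition allT : seq (seq nat) :=
  flatten [seq flatten [seq [seq [:: a; b; c] | c <- iota b.+1 (11 - b)] | b <- iota a.+1 (11 - a)]
    | a <- iota 0 12].
Definition L160 := filter cohb allT.
Definition L60 := filter (fun l => ~~ cohb l) allT.

Definition checkL (Pb : seq nat -> bool) L n :=
  [&& all valid L, uniq L, size L == n,
   all (fun l1 : seq nat => all (fun l2 : seq nat => (l1 == l2) || ~~ all (fun p : nat => p \in l2) l1) L) L,
   all (fun a => all (fun b => all (fun c =>
     (uniq [:: a; b; c] && Pb [:: a; b; c]) ==> (sort leq [:: a; b; c] \in L))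
     (iota 0 12)) (iota 0 12)) (iota 0 12) & all Pb L].
Lemma cL160 : checkL cohb L160 160. Proof. by vm_compute. Qed.
Lemma cL60 : checkL (fun l => ~~ cohb l) L60 60. Proof. by vm_compute. Qed.

Local Close Scope ring_scope.

Theorem proposition6p6 :
  (exists w0, central_nonid w0) /\
  forall w0, central_nonid w0 ->
    [/\ forall S, is_triple S -> coherent w0 S ->
          triple_orbit S = (fun S' => is_triple S' /\ coherent w0 S'),
        forall S, is_triple S -> ~ coherent w0 S ->
          triple_orbit S = (fun S' => is_triple S' /\ ~ coherent w0 S'),
        has_card (fun S => is_triple S /\ coherent w0 S) 160
      & has_card (fun S => is_triple S /\ ~ coherent w0 S) 60].
Proof.
split; first by exists w0M; exact: w0_central.
move=> w cw; split.
- move=> S tS cS; rewrite (orbit_gen cw tS); apply: predext => S'; split.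
  + by case=> h1 h2; split => //; apply/h2.
  + by case=> h1 h2; split.
- move=> S tS cS; rewrite (orbit_gen cw tS); apply: predext => S'; split.
  + by case=> h1 h2; split => // /h2.
  + by case=> h1 h2; split => //; tauto.
- case/and5P: cL160 => h1 h2 h3 h4 /andP[h5 h6].
  apply: (card_gen (Pb := cohb) (P := coherent w) (L := L160)) h1 h2 (eqP h3) h4 h5 h6.
  by move=> l vl; apply: coh_iff.
- case/and5P: cL60 => h1 h2 h3 h4 /andP[h5 h6].
  apply: (card_gen (Pb := fun l => ~~ cohb l) (P := fun S => ~ coherent w S) (L := L60)) h1 h2 (eqP h3) h4 h5 h6.
  move=> l vl; rewrite (coh_iff cw vl).
  by split => [/negP|/negP].
Qed.
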